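(* Let $\hat{\mathcal{C}}$ be a reference frame, $K$ an intrinsic matrix and $C$ a corner matrix with associated unit vectors $a_0,\dots,a_3$ (defined in the context), and let $\delta\ge 0$. Let $\tilde{\mathcal{C}}$ be the frame with the same orientation as $\hat{\mathcal{C}}$ (i.e. ${}^{\hat{\mathcal{C}}}R_{\tilde{\mathcal{C}}}=I$) and with ${}^{\hat{\mathcal{C}}}t_{\tilde{\mathcal{C}}}=[0\ 0\ \tilde z]^T$. If $$\tilde z\ \ge\ \frac{\delta}{\min_{i\in\{0,1,2,3\}} a_{i,z}},$$ then $\mathcal{V}_{\tilde{\mathcal{C}}}(K,C)\subseteq\mathcal{V}_{\mathcal{F}}(K,C)$ for every frame $\mathcal{F}\in\mathcal{P}(\delta,0)$.
   Context: A reference frame is an origin in $\mathbb{R}^3$ with an orthonormal basis. ${}^{\mathcal{F}}R_{\mathcal{G}}$ is the rotation matrix whose columns are the basis vectors of $\mathcal{G}$ expressed in $\mathcal{F}$; ${}^{\mathcal{F}}t_{\mathcal{G}}$ is the vector from the origin of $\mathcal{F}$ to that of $\mathcal{G}$ in $\mathcal{F}$-coordinates; ${}^{\mathcal{F}}y$ is the coordinate vector of a point $y$ in $\mathcal{F}$; $v_z$ is the third component of $v$. $K\in\mathbb{R}^{3\times3}$ is an invertible upper triangular intrinsic matrix, $C=[c_0\ c_1\ c_2\ c_3]\in\mathbb{R}^{2\times4}$ a matrix of image corner points. Define $d_i=K^{-1}[c_i^T\ 1]^T$, $l_i=\operatorname{sign}(d_{i,z})d_i/\|d_i\|_2$, $a_i=-\frac{l_i\times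 l_{(i+1)\bmod4}}{\|l_i\times l_{(i+1)\bmod4}\|_2}$. Field of view of a camera at frame $\mathcal{G}$: $\mathcal{V}_{\mathcal{G}}(K,C)=\{y\in\mathbb{R}^3:({}^{\mathcal{G}}y)^Ta_i\ge0\ \forall i\}$. For $\delta,\epsilon\ge0$, $\mathcal{P}(\delta,\epsilon)$ is the set of frames $\mathcal{F}$ with $\|{}^{\mathcal{F}}t_{\hat{\mathcal{C}}}\|_2\le\delta$ and such that the rotation vector $\theta u$ of ${}^{\mathcal{F}}R_{\hat{\mathcal{C}}}$ satisfies $\|\theta u\|_2\le\epsilon$; thus $\mathcal{P}(\delta,0)$ consists of frames with the same orientation as $\hat{\mathcal{C}}$ whose origin is within distance $\delta$ of that of $\hat{\mathcal{C}}$. *)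

(* Defs.v *)
From HB Require Import structures.
From mathcomp Require Import all_boot all_order all_algebra.
From mathcomp Require Import all_classical all_reals all_analysis.
Set Implicit Arguments. Unset Strict Implicit. Unset Printing Implicit Defensive.
Import Order.TTheory GRing.Theory Num.Theory.
Local Open Scope ring_scope.

Section Defs.
Variable R : realType.

Definition i0 : 'I_3 := @Ordinal 3 0 isT.
Definition i1 : 'I_3 := @Ordinal 3 1 isT.
Definition i2 : 'I_3 := @Ordinal 3 2 isT.
Definition xc (v : 'cV[R]_3) : R := v i0 0.
Definition yc (v : 'cV[R]_3) : R := v i1 0.
Definition zc (v : 'cV[R]_3) : R := v i2 0.

Definition vec3 (a b c : R) : 'cV[R]_3 :=
  \col_(k < 3) (if (k : nat) == 0%N then a else if (k : nat) == 1%N then b else c).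

Definition dotv (u v : 'cV[R]_3) : R := \sum_(k < 3) u k 0 * v k 0.
Definition normv (v : 'cV[R]_3) : R := Num.sqrt (dotv v v).
Definition crossv (u v : 'cV[R]_3) : 'cV[R]_3 :=
  vec3 (yc u * zc v - zc u * yc v) (zc u * xc v - xc u * zc v)
       (xc u * yc v - yc u * xc v).

(* A reference frame, given by the world-coordinates of its origin and the
   matrix whose columns are its (orthonormal) basis vectors in world coords.
   Points y of R^3 are identified with their world coordinates. *)
Record frame := Frame {
  rot : 'M[R]_3 ;
  org : 'cV[R]_3 ;
  rot_orth : rot^T *m rot = 1%:M }.

Definition coord (F : frame) (y : 'cV[R]_3) : 'cV[R]_3 := (rot F)^T *m (y - org F).
Definition relR (F G : frame) : 'M[R]_3 := (rot F)^T *m rot G.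
Definition relt (F G : frame) : 'cV[R]_3 := (rot F)^T *m (org G - org F).

Definition intrinsic (K : 'M[R]_3) : Prop :=
  K \in unitmx /\ forall i j : 'I_3, (j < i)%N -> K i j = 0.

Definition dvec (K : 'M[R]_3) (C : 'M[R]_(2, 4)) (i : 'I_4) : 'cV[R]_3 :=
  invmx K *m vec3 (C (inord 0) i) (C (inord 1) i) 1.
Definition lvec K C i : 'cV[R]_3 :=
  (Num.sg (zc (dvec K C i)) / normv (dvec K C i)) *: dvec K C i.
Definition avec K C (i : 'I_4) : 'cV[R]_3 :=
  let cr := crossv (lvec K C i) (lvec K C (inord ((i + 1) %% 4))) in
  - ((normv cr)^-1 *: cr).

Definition amin K C : R :=
  Num.min (Num.min (zc (avec K C (inord 0))) (zc (avec K C (inord 1))))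
          (Num.min (zc (avec K C (inord 2))) (zc (avec K C (inord 3)))).

Definition fov (G : frame) K C (y : 'cV[R]_3) : Prop :=
  forall i : 'I_4, 0 <= dotv (coord G y) (avec K C i).

Definition skew (u : 'cV[R]_3) : 'M[R]_3 :=
  \matrix_(i < 3, j < 3)
   (if ((i : nat), (j : nat)) == (0%N, 1%N) then - zc u
    else if ((i : nat), (j : nat)) == (0%N, 2%N) then yc u
    else if ((i : nat), (j : nat)) == (1%N, 0%N) then zc u
    else if ((i : nat), (j : nat)) == (1%N, 2%N) then - xc u
    else if ((i : nat), (j : nat)) == (2%N, 0%N) then - yc u
    else if ((i : nat), (j : nat)) == (2%N, 1%N) then xc u
    else 0).

Definition rodrigues (w : 'cV[R]_3) : 'M[R]_3 :=
  let th := normv w in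
  if th == 0 then 1%:M
  else 1%:M + sin th *: skew (th^-1 *: w) + (1 - cos th) *: (skew (th^-1 *: w) *m skew (th^-1 *: w)).

Definition inP (delta eps : R) (Chat F : frame) : Prop :=
  normv (relt F Chat) <= delta /\
  exists w : 'cV[R]_3, normv w <= eps /\ relR F Chat = rodrigues w.

End Defs.

(* Main.v *)
Require Import Defs.
From HB Require Import structures.
From mathcomp Require Import all_boot all_order all_algebra.
From mathcomp Require Import all_classical all_reals all_analysis.
From mathcomp Require Import ring lra.
Import Order.TTheory GRing.Theory Num.Theory.
Local Open Scope ring_scope.

Section Aux.
Context {R : realType}.

Lemma dotv3 (u v : 'cV[R]_3) :
  dotv u v = u i0 0 * v i0 0 + u i1 0 * v i1 0 + u i2 0 * v i2 0.
Proof.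
rewrite /dotv !big_ord_recl big_ord0 addr0 addrA.
have -> : lift ord0 ord0 = i1 :> 'I_3 by apply/val_inj.
have -> : lift ord0 (lift ord0 ord0) = i2 :> 'I_3 by apply/val_inj.
by have -> : ord0 = i0 :> 'I_3 by apply/val_inj.
Qed.

Lemma dotvDl (u v w : 'cV[R]_3) : dotv (u + v) w = dotv u w + dotv v w.
Proof. rewrite !dotv3 !mxE; ring. Qed.

Lemma dot_e3 (a : 'cV[R]_3) z : dotv (vec3 0 0 z) a = z * zc a.
Proof. by rewrite dotv3 !mxE /= !mul0r !add0r. Qed.

Lemma orth_eq (A B : 'M[R]_3) : A^T *m A = 1%:M -> A^T *m B = 1%:M -> B = A.
Proof.
move=> hA hB; have hA' := mulmx1C hA.
by rewrite -(mul1mx B) -hA' -mulmxA hB mulmx1.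
Qed.

Lemma dot_self_ge0 (v : 'cV[R]_3) : 0 <= dotv v v.
Proof. rewrite dotv3; nra. Qed.

Lemma avec_norm (K : 'M[R]_3) (C : 'M[R]_(2,4)) i : dotv (avec K C i) (avec K C i) <= 1.
Proof.
rewrite /avec /normv.
set cr := crossv _ _.
have -> : dotv (- ((Num.sqrt (dotv cr cr))^-1 *: cr)) (- ((Num.sqrt (dotv cr cr))^-1 *: cr))
   = (Num.sqrt (dotv cr cr))^-1 ^+ 2 * dotv cr cr.
  by rewrite !dotv3 !mxE; ring.
have hs := dot_self_ge0 cr.
have [->|nz] := eqVneq (dotv cr cr) 0; first by rewrite mulr0.
have sp : 0 < Num.sqrt (dotv cr cr) by rewrite sqrtr_gt0 lt_neqAle eq_sym nz hs.
rewrite -{2}(sqr_sqrtr hs) -exprMn mulVf ?expr1n //.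
by rewrite gt_eqF.
Qed.

Lemma dot_bound (t a : 'cV[R]_3) (d : R) :
  0 <= d -> normv t <= d -> dotv a a <= 1 -> - d <= dotv t a.
Proof.
move=> hd ht ha.
have hs := dot_self_ge0 t.
have htt : dotv t t <= d ^+ 2.
  rewrite -(sqr_sqrtr hs); rewrite /normv in ht.
  have := sqrtr_ge0 (dotv t t); nra.
move: htt ha; rewrite !dotv3 => htt ha.
set t0 := t i0 0 in htt *; set t1 := t i1 0 in htt *; set t2 := t i2 0 in htt *.
set a0 := a i0 0 in ha *; set a1 := a i1 0 in ha *; set a2 := a i2 0 in ha *.
clear hs ht.
have [d0|dp] := eqVneq d 0.
  subst d.
  rewrite expr0n /= in htt.
  have e0 : t0 = 0 by apply/eqP; rewrite -sqrf_eq0 expr2; apply/eqP; nra.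
  have e1 : t1 = 0 by apply/eqP; rewrite -sqrf_eq0 expr2; apply/eqP; nra.
  have e2 : t2 = 0 by apply/eqP; rewrite -sqrf_eq0 expr2; apply/eqP; nra.
  rewrite e0 e1 e2; lra.
have dp' : 0 < d by rewrite lt_neqAle eq_sym dp hd.
have sq : forall x : R, 0 <= x * x by move=> x; nra.
have q : 0 <= (d * a0 + t0) * (d * a0 + t0) + (d * a1 + t1) * (d * a1 + t1) + (d * a2 + t2) * (d * a2 + t2)
  by rewrite !addr_ge0 // sq.
rewrite expr2 in htt.
have hda : d * d * (a0 * a0 + a1 * a1 + a2 * a2) <= d * d * 1.
  by apply: ler_wpM2l => //; rewrite sq.
have idq : (d * a0 + t0) * (d * a0 + t0) + (d * a1 + t1) * (d * a1 + t1) + (d * a2 + t2) * (d * a2 + t2)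
  = d * d * (a0 * a0 + a1 * a1 + a2 * a2) + 2 * (d * (t0 * a0 + t1 * a1 + t2 * a2 + d)) - 2 * (d * d)
    + (t0 * t0 + t1 * t1 + t2 * t2) by ring.
have h : 0 <= d * (t0 * a0 + t1 * a1 + t2 * a2 + d) by lra.
have : 0 <= t0 * a0 + t1 * a1 + t2 * a2 + d.
  by rewrite -(pmulr_rge0 _ dp').
lra.
Qed.



End Aux.

Lemma amin_le {R : realType} (K : 'M[R]_3) (C : 'M[R]_(2,4)) (i : 'I_4) : amin K C <= zc (avec K C i).
Proof.
have m1 : forall a b c d : R, Num.min (Num.min a b) (Num.min c d) <= a.
  by move=> a b c d; rewrite !ge_min lexx.
have m2 : forall a b c d : R, Num.min (Num.min a b) (Num.min c d) <= b.
  by move=> a b c d; rewrite !ge_min lexx !orbT.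
have m3 : forall a b c d : R, Num.min (Num.min a b) (Num.min c d) <= c.
  by move=> a b c d; rewrite !ge_min lexx !orbT.
have m4 : forall a b c d : R, Num.min (Num.min a b) (Num.min c d) <= d.
  by move=> a b c d; rewrite !ge_min lexx !orbT.
case: i => [[|[|[|[|m]]]] hm]; last by [].
- have -> : Ordinal hm = inord 0 :> 'I_4 by apply/val_inj; symmetry; apply: inordK.
  exact: m1.
- have -> : Ordinal hm = inord 1 :> 'I_4 by apply/val_inj; symmetry; apply: inordK.
  exact: m2.
- have -> : Ordinal hm = inord 2 :> 'I_4 by apply/val_inj; symmetry; apply: inordK.
  exact: m3.
- have -> : Ordinal hm = inord 3 :> 'I_4 by apply/val_inj; symmetry; apply: inordK.
  exact: m4.
Qed.

Theorem theorem1 (R : realType) (Chat Ctil : frame R) (K : 'M[R]_3)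
  (C : 'M[R]_(2, 4)) (delta ztil : R) :
  intrinsic K ->
  0 <= delta ->
  0 < amin K C ->
  relR Chat Ctil = 1%:M ->
  relt Chat Ctil = vec3 0 0 ztil ->
  delta / amin K C <= ztil ->
  forall F : frame R, inP delta 0 Chat F ->
  forall y : 'cV[R]_3, fov Ctil K C y -> fov F K C y.
Proof.
move=> _ hd ham hR ht hz F [hFt [w [hw hFR]]] y hy i.
have w0 : normv w = 0 by apply/le_anti; rewrite hw sqrtr_ge0.
have hFR' : relR F Chat = 1%:M by rewrite hFR /rodrigues w0 eqxx.
have eC : Defs.rot Ctil = Defs.rot Chat := orth_eq _ _ (rot_orth Chat) hR.
have eF : Defs.rot Chat = Defs.rot F := orth_eq _ _ (rot_orth F) hFR'.
have dec : Defs.coord F y = Defs.coord Ctil y + relt Chat Ctil + relt F Chat.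
  rewrite /Defs.coord /relt eC -eF -!mulmxDr; congr (_ *m _).
  by rewrite !addrA subrK subrK.
rewrite dec !dotvDl.
have h1 := hy i.
have h3 := dot_bound _ _ _ hd hFt (avec_norm K C i).
have h2 : delta <= dotv (relt Chat Ctil) (avec K C i).
  have hm := amin_le K C i; rewrite /zc in hm.
  set a := avec K C i in hm *.
  set az := a i2 0 in hm *.
  rewrite ht dot_e3 /zc -/az.
  set m := amin K C in hm ham hz *.
  have e : delta = (delta / m) * m by rewrite divfK // gt_eqF.
  have q0 : 0 <= delta / m by apply: divr_ge0 => //; apply: ltW.
  rewrite {1}e.
  set q := delta / m in q0 hz *.
  have p1 : 0 <= (ztil - q) * az by apply: mulr_ge0; lra.
  have p2 : 0 <= q * (az - m) by apply: mulr_ge0; lra.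
  have idr : ztil * az - q * m = (ztil - q) * az + q * (az - m) by ring.
  lra.
lra.
Qed.
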